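(* Let $q$ be a prime power with $q>2$, $m,n\ge1$, and let $\mathscr{C}\subseteq\mathrm{GF}(q^m)^n$ be a scalable code. Let $f:\mathrm{GF}(q^m)^n\times\mathrm{GF}(q^m)^n\to\mathrm{GF}(q^m)$ be a biadditive form and $\tilde f$ the biadditive form on $\mathrm{GF}(q)^{mn}$ induced by $f$. Suppose $\mathrm{Im}_{\mathscr{B}}(\mathscr{C})$ is self-orthogonal w.r.t. $\tilde f$ for three bases $\mathscr{B}_1,\mathscr{B}_2,\mathscr{B}_3$ of $\mathrm{GF}(q^m)$ over $\mathrm{GF}(q)$ whose dual bases are $\mathscr{B}_1'=\{\beta_1,\ldots,\beta_m\}$, $\mathscr{B}_2'=\{\beta_1+\alpha\beta_2,\beta_2,\ldots,\beta_m\}$ and $\mathscr{B}_3'=\{\beta_1+\gamma\beta_2,\beta_2,\ldots,\beta_m\}$, where $\alpha,\gamma$ are distinct nonzero elements of $\mathrm{GF}(q)$. Then $\mathrm{Tr}(\mathscr{C})$ is self-orthogonal w.r.t. $f$ (restricted to $\mathrm{GF}(q)^n\times\mathrm{GF}(q)^n$), and $\mathrm{Im}_{\mathscr{B}}(\mathscr{C})$ is self-orthogonal w.r.t. $\tilde f$ for every basis $\mathscr{B}$ of $\mathrm{GF}(q^m)$ over $\mathrm{GF}(q)$.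
   Context: $\mathrm{Tr}:\mathrm{GF}(q^m)\to\mathrm{GF}(q)$, $\mathrm{Tr}(a)=\sum_{i=0}^{m-1}a^{q^i}$. The dual basis of a basis $\{\gamma_1,\ldots,\gamma_m\}$ of $\mathrm{GF}(q^m)$ over $\mathrm{GF}(q)$ is the unique basis $\{\beta_1,\ldots,\beta_m\}$ with $\mathrm{Tr}(\gamma_i\beta_j)=\delta_{ij}$. A code $\mathscr{C}\subseteq\mathrm{GF}(q^m)^n$ is scalable if $x\in\mathscr{C}\Rightarrow\alpha x\in\mathscr{C}$ for all $\alpha\in\mathrm{GF}(q^m)$. A biadditive form is additive in each argument. For a basis $\mathscr{B}$ with dual basis $\{\beta_1,\ldots,\beta_m\}$, $\mathrm{Im}_{\mathscr{B}}(\mathscr{C})=\{(\mathrm{Tr}(\beta_1x_1),\ldots,\mathrm{Tr}(\beta_1x_n),\ldots,\mathrm{Tr}(\beta_mx_1),\ldots,\mathrm{Tr}(\beta_mx_n)):x\in\mathscr{C}\}\subseteq\mathrm{GF}(q)^{mn}$, and $\mathrm{Tr}(\mathscr{C})=\{(\mathrm{Tr}(x_1),\ldots,\mathrm{Tr}(x_n)):x\in\mathscr{C}\}$. The induced form is $\tilde f(x,y)=\sum_{i=0}^{m-1}f((x_{in+1},\ldots,x_{in+n}),(y_{in+1},\ldots,y_{in+n}))$ for $x,y\in\mathrm{GF}(q)^{mn}$. A code $D$ is self-orthogonal w.r.t. a form $g$ if $g(x,y)=0$ for all $x,y\in D$. *)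

(* Defs.v *)
From HB Require Import structures.
From mathcomp Require Import all_boot all_order all_algebra.
Set Implicit Arguments. Unset Strict Implicit. Unset Printing Implicit Defensive.
Import Order.TTheory GRing.Theory.
Local Open Scope ring_scope.

(* GF(q) is realized as the subfield {x in L | x^q = x} of L, and all
   vectors over GF(q) are represented as L-valued vectors with entries in
   that subfield. *)

Section Defs.
Variable L : finFieldType.

Definition subGF (q : nat) : pred L := fun x => x ^+ q == x.

Definition Tr (q m : nat) (a : L) : L := \sum_(i < m) a ^+ (q ^ i).

Definition is_basis (q m : nat) (B : 'I_m -> L) : Prop :=
  (forall c : 'I_m -> L, (forall i, c i \in subGF q) ->
      \sum_(i < m) c i * B i = 0 -> forall i, c i = 0)
  /\ (forall x : L, exists c : 'I_m -> L,
        (forall i, c i \in subGF q) /\ x = \sum_(i < m) c i * B i).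

Definition is_dual_basis (q m : nat) (B b : 'I_m -> L) : Prop :=
  forall i j : 'I_m, Tr q m (B i * b j) = (i == j)%:R.

Definition scalable_code (n : nat) (C : {set 'rV[L]_n}) : Prop :=
  forall (a : L) (x : 'rV[L]_n), x \in C -> a *: x \in C.

Definition biadditive (V : zmodType) (f : V -> V -> L) : Prop :=
  (forall x y z, f (x + y) z = f x z + f y z) /\
  (forall x y z, f x (y + z) = f x y + f x z).

(* Im_B(C), where b is the dual basis of B.  An element of GF(q)^{mn} is
   stored as an m x n matrix whose i-th row is the i-th block of n
   coordinates (Tr(b_i x_1), ..., Tr(b_i x_n)). *)
Definition ImB (q m n : nat) (b : 'I_m -> L) (C : {set 'rV[L]_n})
  : {set 'M[L]_(m, n)} :=
  [set (\matrix_(i < m, k < n) Tr q m (b i * x 0 k)) | x : 'rV[L]_n in C].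

Definition TrC (q m n : nat) (C : {set 'rV[L]_n}) : {set 'rV[L]_n} :=
  [set (\row_(k < n) Tr q m (x 0 k)) | x : 'rV[L]_n in C].

Definition induced (m n : nat) (f : 'rV[L]_n -> 'rV[L]_n -> L)
  (X Y : 'M[L]_(m, n)) : L :=
  \sum_(i < m) f (row i X) (row i Y).

Definition self_orth (V : finType) (g : V -> V -> L) (D : {set V}) : Prop :=
  forall x y, x \in D -> y \in D -> g x y = 0.

(* the dual basis {b_1 + a b_2, b_2, ..., b_m} (needs 1 < m) *)
Definition modify_dual (m : nat) (h : (1 < m)%N) (b : 'I_m -> L) (a : L)
  : 'I_m -> L :=
  fun j => if val j == 0%N then b j + a * b (Ordinal h) else b j.

End Defs.

(* Main.v *)
Require Import Defs.
From HB Require Import structures.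
From mathcomp Require Import all_boot all_order all_algebra finfield.
From mathcomp Require Import ring.
Import Order.TTheory GRing.Theory.
Local Open Scope ring_scope.

Section Key.
Variable (L : fieldType) (q : nat) (g : L -> L -> L).
Hypothesis gl : forall x y z, g (x + y) z = g x z + g y z.
Hypothesis gr : forall x y z, g x (y + z) = g x y + g x z.
Hypothesis Frob : forall a b : L, (a + b) ^+ q = a ^+ q + b ^+ q.
Hypothesis hq0 : (0 < q)%N.

Lemma g0l z : g 0 z = 0.
Proof. have h := gl 0 0 z; rewrite addr0 in h. by apply: (addrI (g 0 z)); rewrite addr0 -h. Qed.
Lemma g0r z : g z 0 = 0.
Proof. have h := gr z 0 0; rewrite addr0 in h. by apply: (addrI (g z 0)); rewrite addr0 -h. Qed.
Lemma gNl x z : g (- x) z = - g x z.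
Proof. by apply: (addrI (g x z)); rewrite -gl subrr g0l subrr. Qed.
Lemma gNr x z : g z (- x) = - g z x.
Proof. by apply: (addrI (g z x)); rewrite -gr subrr g0r subrr. Qed.
Lemma gBl x y z : g (x - y) z = g x z - g y z.
Proof. by rewrite gl gNl. Qed.
Lemma gBr x y z : g z (x - y) = g z x - g z y.
Proof. by rewrite gr gNr. Qed.

Lemma fN1 : (-1 : L) ^+ q = -1.
Proof.
have h := Frob 1 (-1); rewrite subrr expr0n expr1n in h.
have h' : 1 + (-1 : L) ^+ q = 0 by rewrite -h; case: q hq0.
by rewrite -[LHS]add0r -(addNr 1) -addrA h' addr0.
Qed.

Lemma iterE v (E : forall l mu, g (v * l) mu = g l ((-1 - v) * mu)) :
  forall l mu, g (v ^+ q * l) mu = g l ((-1 - v ^+ q) * mu).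
Proof.
have it : forall n l mu, g (v ^+ n * l) mu = g l ((-1 - v) ^+ n * mu).
  elim=> [|n IH] l mu; first by rewrite !expr0 !mul1r.
  by rewrite exprS -mulrA E IH exprSr -mulrA.
move=> l mu; by rewrite it Frob fN1 exprNn fN1 mulN1r.
Qed.

Lemma key u v s (hs : s ^+ q = s) (hs1 : s != 1) (hu : u ^+ q != u)
  (hv : v = s * u)
  (E1 : forall l mu, g (u * l) mu = g l ((-1 - u) * mu))
  (E2 : forall l mu, g (v * l) mu = g l ((-1 - v) * mu)) :
  forall l mu, g l mu = 0.
Proof.
have E1q := @iterE u E1.
have E2q := @iterE v E2.
have Dnz : u ^+ q - u != 0 by rewrite subr_eq0.
set D := u ^+ q - u in Dnz.
have A : forall l mu, g (D * l) mu = g l (- (D * mu)).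
  move=> l mu; rewrite /D mulrBl gBl E1q E1 -gBr; congr (g _ _); ring.
have B : forall l mu, g (s * D * l) mu = g l (- (s * D * mu)).
  move=> l mu; rewrite (_ : s * D * l = v ^+ q * l - v * l); last first.
    by rewrite hv exprMn hs /D; ring.
  rewrite gBl E2q E2 -gBr; congr (g _ _); rewrite hv exprMn hs /D; ring.
have C : forall l mu, g (s * l) mu = g l (s * mu).
  move=> l mu.
  have [mu0 ->] : exists mu0, mu = - (D * mu0).
    by exists (- (mu / D)); rewrite mulrN opprK mulrC divfK.
  rewrite -A (_ : D * (s * l) = s * D * l); last by ring.
  by rewrite B; congr (g _ _); ring.
have H : forall l mu, g l ((1 - s) * mu) = 0.
  move=> l mu; have := E2 l mu; rewrite hv -mulrA C E1 => h.
  rewrite (_ : (1 - s) * mu = (-1 - u) * (s * mu) - (-1 - s * u) * mu); last by ring.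
  by rewrite gBr h subrr.
have s1 : 1 - s != 0 by rewrite subr_eq0 eq_sym.
move=> l mu; rewrite -[mu](mulVKf s1); exact: H.
Qed.
End Key.

Lemma frobP (L : finFieldType) q m (hqpp : exists p k : nat, prime p /\ q = (p ^ k.+1)%N)
  (hL : #|L| = (q ^ m)%N) : forall i (a b : L), (a + b) ^+ (q ^ i) = a ^+ (q ^ i) + b ^+ (q ^ i).
Proof.
case: hqpp => p [k [pp qE]].
have pc : p \in [pchar L].
  by apply: (@card_finPcharP _ p (k.+1 * m)) => //; rewrite hL qE expnM.
move=> i a b; apply: exprDn_pchar.
by rewrite (eq_pnat _ (pcharf_eq pc)) qE !pnatX pnat_id.
Qed.

Section TrL.
Variables (L : finFieldType) (q m : nat).
Hypothesis Fr : forall i (a b : L), (a + b) ^+ (q ^ i) = a ^+ (q ^ i) + b ^+ (q ^ i).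
Lemma TrD (a b : L) : Tr q m (a + b) = Tr q m a + Tr q m b.
Proof. by rewrite /Tr -big_split; apply: eq_bigr => i _; rewrite Fr. Qed.
Lemma Tr0 : (0 < q)%N -> Tr q m (0 : L) = 0.
Proof. by move=> q0; rewrite /Tr big1 // => i _; rewrite expr0n expn_eq0 eqn0Ngt q0. Qed.
Lemma TrZ (c a : L) : c ^+ q = c -> Tr q m (c * a) = c * Tr q m a.
Proof.
move=> cq; have ci : forall i, c ^+ (q ^ i) = c.
  by elim=> [|i IH]; rewrite ?expn0 ?expr1 // expnS exprM cq.
by rewrite /Tr mulr_sumr; apply: eq_bigr => i _; rewrite exprMn ci.
Qed.
End TrL.

Lemma solve3 (L : comRingType) (X Y Z : L) : X + Y + Z = 0 -> X = - Z - Y.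
Proof. by move=> e; rewrite -[X]subr0 -e; ring. Qed.

Theorem theorem4 (L : finFieldType) (q m n : nat)
  (hqpp : exists p k : nat, prime p /\ q = (p ^ k.+1)%N)
  (hq : (2 < q)%N) (hm : (1 < m)%N) (hn : (0 < n)%N)
  (hL : #|L| = (q ^ m)%N)
  (C : {set 'rV[L]_n}) (hC : scalable_code C)
  (f : 'rV[L]_n -> 'rV[L]_n -> L) (hf : biadditive f)
  (beta : 'I_m -> L) (alpha gamma : L)
  (halpha : alpha \in subGF q) (hgamma : gamma \in subGF q)
  (halpha0 : alpha != 0) (hgamma0 : gamma != 0) (hag : alpha != gamma)
  (B1 B2 B3 : 'I_m -> L)
  (hB1 : is_basis q B1) (hB2 : is_basis q B2) (hB3 : is_basis q B3)
  (hd1 : is_dual_basis q B1 beta)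
  (hd2 : is_dual_basis q B2 (modify_dual hm beta alpha))
  (hd3 : is_dual_basis q B3 (modify_dual hm beta gamma))
  (hso1 : self_orth (induced f) (ImB q beta C))
  (hso2 : self_orth (induced f) (ImB q (modify_dual hm beta alpha) C))
  (hso3 : self_orth (induced f) (ImB q (modify_dual hm beta gamma) C)) :
  self_orth f (TrC q m C) /\
  (forall B b : 'I_m -> L, is_basis q B -> is_dual_basis q B b ->
     self_orth (induced f) (ImB q b C)).
Proof.
have Fr := @frobP L q m hqpp hL.
have Frq : forall a b : L, (a + b) ^+ q = a ^+ q + b ^+ q.
  by move=> a b; have := Fr 1%N a b; rewrite expn1.
have q0 : (0 < q)%N by apply: ltn_trans hq.
pose T (v : 'rV[L]_n) : 'rV[L]_n := \row_k Tr q m (v 0 k).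
have TD : forall v w, T (v + w) = T v + T w.
  by move=> v w; apply/rowP => k; rewrite !mxE (@TrD L q m Fr).
case: hf => fl fr.
have rowI : forall (b : 'I_m -> L) (x : 'rV[L]_n) i,
    row i (\matrix_(i0 < m, k < n) Tr q m (b i0 * x 0 k)) = T ((b i) *: x).
  by move=> b x i; apply/rowP => k; rewrite !mxE.
have ImBin : forall b x, x \in C ->
    \matrix_(i < m, k < n) Tr q m (b i * x 0 k) \in ImB q b C.
  by move=> b x xC; apply/imsetP; exists x.
have So : forall b, self_orth (induced f) (ImB q b C) -> forall x y, x \in C -> y \in C ->
    \sum_(i < m) f (T (b i *: x)) (T (b i *: y)) = 0.
  move=> b hso x y xC yC; rewrite -[RHS](hso _ _ (ImBin b x xC) (ImBin b y yC)) /induced.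
  by apply: eq_bigr => i _; rewrite !rowI.
have main : forall x y, x \in C -> y \in C -> f (T x) (T y) = 0.
  move=> x y xC yC.
  pose h l mu := f (T (l *: x)) (T (mu *: y)).
  have hl : forall a b c, h (a + b) c = h a c + h b c.
    by move=> a b c; rewrite /h scalerDl TD fl.
  have hr : forall a b c, h a (b + c) = h a b + h a c.
    by move=> a b c; rewrite /h scalerDl TD fr.
  have Sb : forall b, self_orth (induced f) (ImB q b C) -> forall l mu,
      \sum_(i < m) h (b i * l) (b i * mu) = 0.
    move=> b hso l mu.
    rewrite -[RHS](So b hso (l *: x) (mu *: y) (hC _ _ xC) (hC _ _ yC)).
    by apply: eq_bigr => i _; rewrite /h !scalerA.
  pose i0 := Ordinal (ltnW hm).
  pose i1 := Ordinal hm.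
  have Ea : forall a, self_orth (induced f) (ImB q (modify_dual hm beta a) C) ->
      forall l mu, h (beta i0 * l) (a * beta i1 * mu) + h (a * beta i1 * l) (beta i0 * mu)
                   + h (a * beta i1 * l) (a * beta i1 * mu) = 0.
    move=> a hso l mu.
    have e1 := Sb _ hso1 l mu; have e2 := Sb _ hso l mu.
    rewrite (bigD1 i0) //= in e1; rewrite (bigD1 i0) //= in e2.
    rewrite (eq_bigr (fun i => h (beta i * l) (beta i * mu))) in e2; last first.
      move=> i ni; rewrite /modify_dual.
      have -> : (val i == 0%N) = false.
        by apply/negbTE; apply: contra ni => /eqP e; apply/eqP/val_inj.
      by [].
    rewrite /modify_dual /= in e2.
    have e := addIr _ (etrans e2 (esym e1)).
    rewrite !mulrDl hl !hr in e.
    apply: (addrI (h (beta i0 * l) (beta i0 * mu))); rewrite addr0 -[RHS]e.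
    by rewrite !addrA.
  have hb1 : beta i1 != 0.
    apply/eqP => e0; have := hd1 i1 i1; rewrite e0 mulr0 (@Tr0 L q m q0) eqxx => /eqP.
    by rewrite eq_sym oner_eq0.
  have aq : alpha ^+ q = alpha by apply/eqP.
  have gq : gamma ^+ q = gamma by apply/eqP.
  pose t := beta i0 / beta i1.
  pose g l mu := h (beta i1 * l) (beta i1 * mu).
  have Eg : forall a, a != 0 -> self_orth (induced f) (ImB q (modify_dual hm beta a) C) ->
      forall l mu, g (t / a * l) mu = g l ((-1 - t / a) * mu).
    move=> a a0 hso l mu; have e := Ea a hso (l / a) (mu / a).
    rewrite (_ : beta i0 * (l / a) = beta i1 * (t / a * l)) in e; last by rewrite /t; (field; rewrite ?a0 ?hb1 ?halpha0 ?hgamma0).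
    rewrite (_ : a * beta i1 * (mu / a) = beta i1 * mu) in e; last by (field; rewrite ?a0 ?hb1 ?halpha0 ?hgamma0).
    rewrite (_ : a * beta i1 * (l / a) = beta i1 * l) in e; last by (field; rewrite ?a0 ?hb1 ?halpha0 ?hgamma0).
    rewrite (_ : beta i0 * (mu / a) = beta i1 * (t / a * mu)) in e; last by rewrite /t; (field; rewrite ?a0 ?hb1 ?halpha0 ?hgamma0).
    rewrite /g (_ : beta i1 * ((-1 - t/a) * mu) = -(beta i1 * mu) - beta i1 * (t/a*mu)); last by ring.
    rewrite (@gBr _ h hr) (@gNr _ h hr); exact: solve3 e.
  have Ha := Eg alpha halpha0 hso2.
  have Hg := Eg gamma hgamma0 hso3.
  have gl' : forall a b c, g (a + b) c = g a c + g b c by move=> a b c; rewrite /g mulrDr hl.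
  have gr' : forall a b c, g a (b + c) = g a b + g a c by move=> a b c; rewrite /g mulrDr hr.
  have hs : (alpha / gamma) ^+ q = alpha / gamma by rewrite exprMn exprVn aq gq.
  have hs1 : alpha / gamma != 1.
    apply: contra hag => /eqP e; apply/eqP; by rewrite -[alpha](divfK hgamma0) e mul1r.
  have hu : (t / alpha) ^+ q != t / alpha.
    apply/negP => /eqP uq.
    have tq : t ^+ q = t.
      have -> : t = t / alpha * alpha by rewrite divfK.
      by rewrite exprMn uq aq.
    have b0 : beta i0 = t * beta i1 by rewrite /t divfK.
    have := hd1 i0 i0; rewrite eqxx b0 mulrCA (@TrZ L q m _ _ tq) hd1.
    rewrite (_ : (i0 == i1) = false) // mulr0 => /eqP.
    by rewrite eq_sym oner_eq0.
  have hv : t / gamma = alpha / gamma * (t / alpha) by (field; rewrite ?a0 ?hb1 ?halpha0 ?hgamma0).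
  have gz := @key L q g gl' gr' Frq q0 (t / alpha) (t / gamma) (alpha / gamma) hs hs1 hu hv Ha Hg.
  have := gz (beta i1)^-1 (beta i1)^-1.
  by rewrite /g /h mulfV // !scale1r.
split.
  by move=> X Y /imsetP[x xC ->] /imsetP[y yC ->]; exact: main.
move=> B b _ _ X Y /imsetP[x xC ->] /imsetP[y yC ->]; rewrite /induced big1 // => i _.
by rewrite !rowI; apply: main; apply: hC.
Qed.
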